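(* Let $A$ be a finite alphabet with $|A|=k$, and let $L\subseteq A^*$ be $n$-PT. Let $m=f_k(n)$. Then $I(L)$ is $(m+1)$-PT.
   Context: For words $u,v$, $u\sqsubseteq v$ (subword) means $u=a_1\cdots a_\ell$ with letters $a_i$ and $v=v_0a_1v_1\cdots a_\ell v_\ell$ for some words $v_i$. $u\perp v$ means $u\not\sqsubseteq v$ and $v\not\sqsubseteq u$. $I(L)=\{u\in A^*~|~\exists v\in L: u\perp v\}$. For $n\in\mathbb{N}$, $u\sim_n v$ iff $u$ and $v$ have exactly the same subwords of length at most $n$; $L$ is $n$-PT if it is a union of $\sim_n$-classes. The functions $f_k:\mathbb{N}\to\mathbb{N}$ ($k\geq1$) are defined by $f_1(n)=n$ and $f_{k+1}(n)=\max_{0\leq m\leq n}\bigl(m f_k(n+1-m)+m+f_k(n-m)\bigr)$. *)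

(* Defs.v *)
From mathcomp Require Import all_boot.
Set Implicit Arguments. Unset Strict Implicit. Unset Printing Implicit Defensive.

Definition subword (A : eqType) (u v : seq A) : bool := subseq u v.

Definition incomparable (A : eqType) (u v : seq A) : Prop :=
  ~~ subword u v /\ ~~ subword v u.

Definition Iset (A : eqType) (L : seq A -> Prop) : seq A -> Prop :=
  fun u => exists v, L v /\ incomparable u v.

Definition simn (A : eqType) (n : nat) (u v : seq A) : Prop :=
  forall w : seq A, size w <= n -> subword w u = subword w v.

Definition nPT (A : eqType) (n : nat) (L : seq A -> Prop) : Prop :=
  forall u v : seq A, simn n u v -> (L u <-> L v).

(* fF j = f_{j+1}:  fF 0 n = n,
   fF (j+1) n = max_{0<=m<=n} (m * fF j (n+1-m) + m + fF j (n-m)) *)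
Fixpoint fF (j : nat) (n : nat) : nat :=
  match j with
  | 0 => n
  | j'.+1 => \max_(0 <= m < n.+1) (m * fF j' (n.+1 - m) + m + fF j' (n - m))
  end.

(* f_k for k >= 1 *)
Definition f (k n : nat) : nat := fF k.-1 n.

(* Main.v *)
Require Import Defs.
From mathcomp Require Import all_boot.
From mathcomp Require Import zify.
From Stdlib Require Import Classical.
Set Implicit Arguments. Unset Strict Implicit. Unset Printing Implicit Defensive.

Section Words.
Variable T : eqType.
Implicit Types s x y z : seq T.

Lemma subseq_catE s x y : subseq s (x ++ y) ->
  exists s1 s2, s = s1 ++ s2 /\ subseq s1 x /\ subseq s2 y.
Proof.
elim: x s => [|a x IH] s /=; first by move=> H; exists [::], s; split; [|split].
case: s => [|b s] /=; first by move=> _; exists [::], [::]; split; [|split]; rewrite ?sub0seq.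
case: eqP => [->|_] H.
  have [s1 [s2 [-> [H1 H2]]]] := IH _ H.
  by exists (a :: s1), s2; rewrite /= eqxx.
have [s1 [s2 [E [H1 H2]]]] := IH _ H.
exists s1, s2; split=> //; split=> //.
exact: subseq_trans H1 (subseq_cons _ _).
Qed.

Lemma subseq_rconsE s x c : subseq s (rcons x c) ->
  subseq s x \/ exists s', s = rcons s' c /\ subseq s' x.
Proof.
rewrite -cats1 => /subseq_catE [s1 [s2 [-> [H1 H2]]]].
case: s2 H2 => [|d [|e s2]] H2.
- by left; rewrite cats0.
- move: H2; rewrite sub1seq inE => /eqP ->.
  by right; exists s1; rewrite cats1.
- by move: H2; rewrite /=; case: ifP.
Qed.

Lemma subseq_consE s x c : subseq s (c :: x) ->
  subseq s x \/ exists s', s = c :: s' /\ subseq s' x.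
Proof.
case: s => [|d s] /=; first by left; apply: sub0seq.
case: eqP => [->|_] H; [by right; exists s | by left].
Qed.

Lemma subseq_eq_size s x : subseq s x -> size s = size x -> s = x.
Proof.
move=> H E; have := size_subseq_leqif H; rewrite E => [[_ /esym]].
by rewrite eqxx => /eqP.
Qed.

Lemma subseq_size_gt s x : size x < size s -> ~~ subseq s x.
Proof. by move=> H; apply/negP=> /size_subseq; rewrite leqNgt H. Qed.

Lemma cat_eqE x1 y1 x2 y2 : x1 ++ y1 = x2 ++ y2 ->
  exists s, (x2 = x1 ++ s /\ y1 = s ++ y2) \/ (x1 = x2 ++ s /\ y2 = s ++ y1).
Proof.
elim: x1 x2 => [|a x1 IH] [|b x2] /=.
- by move=> ->; exists [::]; left.
- by move=> ->; exists (b :: x2); left.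
- by move=> <-; exists (a :: x1); right.
case=> -> /IH [s [[-> ->]|[-> ->]]]; exists s; [left|right]; by [].
Qed.

Lemma insert_step s x : subseq s x -> size s < size x ->
  exists s', [/\ subseq s s', subseq s' x & size s' = (size s).+1].
Proof.
elim: x s => [|a x IH] s //= H Hs.
case: s H Hs => [|b s] /= H Hs.
  by exists [:: a]; rewrite /= eqxx sub0seq.
move: H; case: eqP => [->|ne] H.
  have [s' [H1 H2 H3]] := IH _ H Hs.
  by exists (a :: s'); rewrite /= !eqxx H3.
have [lt|eq] := ltnP (size (b :: s)) (size x).
  have [s' [H1 H2 H3]] := IH _ H lt.
  by exists s'; split=> //; apply: subseq_trans H2 (subseq_cons _ _).
have E : b :: s = x.
  have Hs' := size_subseq H.
  apply: subseq_eq_size H _; apply/eqP; rewrite eqn_leq eq andbT //.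
exists (a :: x); split.
- by apply: subseq_trans (subseq_cons x a); rewrite E subseq_refl.
- by rewrite eqxx subseq_refl.
- by rewrite /= -E.
Qed.


Lemma swapS c d (Z U : seq T) : c :: (Z ++ d :: U) = Z ++ d :: d :: U ->
  Z ++ d :: U = c :: Z ++ U.
Proof.
elim: Z => [|e Z IH] /=; first by case=> ->.
case=> Ece E; rewrite -Ece in E *.
by rewrite (IH E).
Qed.

Lemma delD X1 Y1 X2 Y2 (c1 c2 : T) :
  X1 ++ c1 :: Y1 = X2 ++ c2 :: Y2 ->
  X1 ++ c1 :: c1 :: Y1 = X2 ++ c2 :: c2 :: Y2 ->
  X1 ++ Y1 = X2 ++ Y2.
Proof.
elim: X1 X2 => [|a X1 IH] [|b X2] /= E1 E2.
- by case: E1 => _ ->.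
- case: E1 => Ecb EY; case: E2 => _ E2; subst b Y1.
  by rewrite (swapS E2).
- case: E1 => Eca EY; case: E2 => _ E2; subst a Y2.
  by rewrite -(swapS (esym E2)).
- case: E1 => Eab E1; case: E2 => _ E2; subst b.
  by rewrite (IH _ E1 E2).
Qed.

End Words.

Section Simn.
Variable A : eqType.
Implicit Types u v w s t x y z : seq A.

Lemma simn_refl n u : simn n u u.
Proof. by []. Qed.

Lemma simn_sym n u v : simn n u v -> simn n v u.
Proof. by move=> H w Hw; rewrite H. Qed.

Lemma simn_trans n u v w : simn n u v -> simn n v w -> simn n u w.
Proof. by move=> H1 H2 s Hs; rewrite H1 // H2. Qed.

Lemma simn_mono m n u v : m <= n -> simn n u v -> simn m u v.
Proof. by move=> Hmn H s Hs; apply: H; apply: leq_trans Hs Hmn. Qed.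

Lemma simn_conv n (a b c : seq A) : subseq a b -> subseq b c -> simn n a c -> simn n b c.
Proof.
move=> Hab Hbc H s Hs; rewrite /subword.
apply/idP/idP => [Hsb|Hsc]; first exact: subseq_trans Hsb Hbc.
have : subword s a by rewrite H.
by move=> Hsa; apply: subseq_trans Hsa Hab.
Qed.

Lemma simn_small N u u' : simn N u u' -> size u < N -> u = u'.
Proof.
move=> H Hu.
have Huu' : subseq u u' by have := H u (ltnW Hu); rewrite /subword subseq_refl.
have [le|lt] := leqP (size u') (size u).
  have Hs := size_subseq Huu'.
  by apply: subseq_eq_size Huu' _; apply/eqP; rewrite eqn_leq le Hs.
have Ht : size (take (size u).+1 u') = (size u).+1 by rewrite size_takel.
have := H (take (size u).+1 u'); rewrite Ht => /(_ Hu).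
rewrite /subword take_subseq => Hsub.
have : subseq (take (size u).+1 u') u by rewrite Hsub.
by move=> /size_subseq; rewrite Ht ltnn.
Qed.

Lemma pump n x y (c : A) : simn n (x ++ y) (x ++ c :: y) ->
  simn n (x ++ c :: y) (x ++ c :: c :: y).
Proof.
move=> H s Hs; rewrite /subword; apply/idP/idP => Hsub.
  by apply: subseq_trans Hsub _; rewrite subseq_cat2l; exact: (subseq_cons (c :: y) c).
move: Hsub; rewrite -cat1s catA cats1 => /subseq_catE [s1 [s2 [Es [H1 H2]]]].
subst s.
have Hfin : forall s1 s2, subseq s1 (rcons x c) -> subseq s2 y ->
    subseq (s1 ++ s2) (x ++ c :: y).
  move=> a b Ha Hb; rewrite -cat_rcons; exact: cat_subseq Ha Hb.
case: (subseq_consE H2) => [H2'|[s2' [E2 H2']]].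
  exact: Hfin.
case: (subseq_rconsE H1) => [H1'|[s1' [E1 H1']]].
  by rewrite cat_subseq.
subst s1 s2.
have Ht : subword (s1' ++ c :: s2') (x ++ c :: y) by rewrite /subword cat_subseq //= eqxx.
have Hsz : size (s1' ++ c :: s2') <= n.
  by move: Hs; rewrite !size_cat /= ?size_rcons; lia.
rewrite -H // /subword in Ht.
have [t1 [t2 [Et [Ht1 Ht2]]]] := subseq_catE Ht.
have [r [[E1 E2]|[E1 E2]]] := cat_eqE Et.
-
  case: r E1 E2 => [|d r] E1 /= E2.
    rewrite cats0 in E1; subst t1 t2.
    by rewrite cat_rcons; apply: cat_subseq => //=; rewrite eqxx.
  case: E2 => Ed E2; subst d t1.
  apply: cat_subseq.
    apply: subseq_trans Ht1; rewrite -cats1 subseq_cat2l sub1seq.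
    exact: mem_head.
  by rewrite /= eqxx.
-
  subst s1' t2.
  rewrite cat_rcons; apply: cat_subseq => //=.
  by rewrite eqxx; apply: subseq_trans Ht2; apply: suffix_subseq.
Qed.

End Simn.

Section Rich.
Variable A : finType.
Implicit Types s t w x y z P Q X : seq A.
Implicit Types S : {set A}.

Definition over (S : {set A}) s := all (fun a => a \in S) s.

Definition Rich (S : {set A}) i P :=
  forall s, over S s -> size s <= i -> subseq s P.

Lemma rich0 S P : Rich S 0 P.
Proof. by move=> [|a s] //= _ _; apply: sub0seq. Qed.

Lemma rich_cat S i j P Q : Rich S i P -> Rich S j Q -> Rich S (i + j) (P ++ Q).
Proof.
move=> HP HQ s Hs Hsz.
have : over S (take i s ++ drop i s) by rewrite cat_take_drop.
rewrite /over all_cat => /andP [Ht Hd].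
rewrite -[X in subseq X _](cat_take_drop i s); apply: cat_subseq.
  by apply: HP => //; rewrite size_take_min geq_minl.
by apply: HQ => //; rewrite size_drop; lia.
Qed.

Lemma rich1 (S : {set A}) B : (forall a, a \in S -> a \in B) -> Rich S 1 B.
Proof.
move=> H [|a [|b s]] //= Hs _; first exact: sub0seq.
by rewrite sub1seq; apply: H; move: Hs => /andP[].
Qed.

Lemma over_subseq S s w : subseq s w -> over S w -> over S s.
Proof.
move=> Hsub /allP Hw; apply/allP => a Ha; apply: Hw.
exact: (mem_subseq Hsub).
Qed.

Lemma red S i j r n P X X' Q :
  Rich S i P -> Rich S j Q -> over S (P ++ X ++ Q) ->
  (forall t, size t <= r -> subseq t X -> subseq t X') ->
  subseq X' X -> n <= i + j + r ->
  simn n (P ++ X' ++ Q) (P ++ X ++ Q).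
Proof.
move=> HP HQ Hov HX HX' Hn s Hs; rewrite /subword; apply/idP/idP => Hsub.
  apply: subseq_trans Hsub _; apply: cat_subseq; first exact: subseq_refl.
  by apply: cat_subseq => //; apply: subseq_refl.
move: Hov; rewrite /over !all_cat => /and3P [HovP HovX HovQ].
have [s1 [s23 [E1 [H1 H23]]]] := subseq_catE Hsub.
have [s2 [s3 [E2 [H2 H3]]]] := subseq_catE H23.
subst s s23.
have key : forall k s1 s2 s3, size s2 <= k -> subseq s1 P -> subseq s2 X ->
    subseq s3 Q -> size (s1 ++ s2 ++ s3) <= n ->
    subseq (s1 ++ s2 ++ s3) (P ++ X' ++ Q).
  elim=> [|k IH] t1 t2 t3 Hk Ht1 Ht2 Ht3 Hsz.
    apply: cat_subseq => //; apply: cat_subseq => //.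
    by apply: HX => //; apply: leq_trans Hk _.
  have [le|lt] := leqP (size t2) r.
    by apply: cat_subseq => //; apply: cat_subseq => //; apply: HX.
  have Hov2 : over S t2 := over_subseq Ht2 HovX.
  have Hsz' := Hsz; rewrite !size_cat in Hsz'.
  have [lt1|ge1] := ltnP (size t1) i.
    case: t2 Hk Ht2 lt Hov2 Hsz Hsz' => [|c t2] //= Hk Ht2 lt /andP [Hc Hov2] Hsz Hsz'.
    rewrite -cat_rcons; apply: IH => //.
    - apply: HP; last by rewrite size_rcons.
      by rewrite /over all_rcons Hc; apply: over_subseq Ht1 HovP.
    - exact: cons_subseq Ht2.
    - by rewrite cat_rcons.
  have lt3 : size t3 < j by lia.
  case/lastP: t2 Hk Ht2 lt Hov2 Hsz Hsz' => [|t2 c] //; rewrite size_rcons => Hk Ht2 lt Hov2 Hsz Hsz'.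
  move: Hov2; rewrite /over all_rcons => /andP [Hc Hov2].
  rewrite cat_rcons; apply: IH => //.
  - by apply: subseq_trans Ht2; apply: subseq_rcons.
  - apply: HQ => //=; rewrite Hc /=; exact: over_subseq Ht3 HovQ.
  - by rewrite -cat_rcons.
exact: (key (size s2)).
Qed.

Lemma rich_decomp S w : w != [::] -> over S w -> (forall a, a \in S -> a \in w) ->
  exists w1 a w2, [/\ w = w1 ++ a :: w2, a \in S, a \notin w1 &
                    forall b, b \in S -> b \in rcons w1 a].
Proof.
elim/last_ind: w => [|w0 x IH] // _.
rewrite /over all_rcons => /andP [Hx Hov] Hall.
case: (classic (forall a, a \in S -> a \in w0)) => Hw0.
  case: w0 IH Hov Hall Hw0 => [|y w0] IH Hov Hall Hw0.
    by exists [::], x, [::]; split => // b /Hw0.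
  have [w1 [a [w2 [E Ha Hna Hb]]]] := IH isT Hov Hw0.
  exists w1, a, (rcons w2 x); split => //.
  by rewrite E rcons_cat.
exists w0, x, [::]; split => //; first by rewrite cats1.
apply/negP => Hxw0; apply: Hw0 => a Ha.
by move: (Hall a Ha); rewrite mem_rcons inE => /orP [/eqP ->|].
Qed.

End Rich.

Section Bound.
Variable A : finType.
Implicit Types s t w x y z P Q X : seq A.
Implicit Types S : {set A}.

Lemma card_del S a : a \in S -> #|S :\ a| = #|S|.-1.
Proof. by move=> Ha; rewrite (cardsD1 a S) Ha. Qed.

Lemma over_del S a w : over S w -> a \notin w -> over (S :\ a) w.
Proof.
move=> /allP Hw Ha; apply/allP => b Hb; rewrite in_setD1 Hw // andbT.
by apply/eqP => Eb; subst b; rewrite Hb in Ha.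
Qed.

Section Gen.
Variable h : nat -> nat.
Variable sz : nat.
Hypothesis IHh : forall (S' : {set A}) r w, #|S'| <= sz -> over S' w -> h r < size w ->
  exists y c z, w = y ++ c :: z /\ simn r (y ++ z) w.
Variable S : {set A}.
Hypothesis HS : #|S| <= sz.+1.
Variable n : nat.

Definition NR P w := forall y c z, w = y ++ c :: z -> ~ simn n (P ++ y ++ z) (P ++ w).

Lemma gen_tail w P i : i <= n -> Rich S i P -> over S (P ++ w) -> NR P w ->
  ~ (w != [::] /\ forall a, a \in S -> a \in w) ->
  exists m, [/\ i <= m, m <= n, Rich S (m - i) w &
             size w <= (m - i) * (h (n.+1 - m)).+1 + h (n - m)].
Proof.
move=> Hi HP Hov NRw Hnd; exists i; rewrite subnn mul0n add0n; split => //.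
  exact: rich0.
rewrite leqNgt; apply/negP => Hlt.
have Hne : w != [::] by case: w Hlt {Hov NRw Hnd}.
have [a Ha Haw] : exists2 a, a \in S & a \notin w.
  apply: NNPP => Hno; apply: Hnd; split => // a Ha.
  by apply: NNPP => Haw; apply: Hno; exists a => //; apply/negP.
have HovP : over S P by move: Hov; rewrite /over all_cat => /andP[].
have Hovw : over S w by move: Hov; rewrite /over all_cat => /andP[].
have Hc : #|S :\ a| <= sz by rewrite card_del //; lia.
have [y [c [z [Ew Hsim]]]] := IHh Hc (over_del Hovw Haw) Hlt.
have := @red _ S i 0 (n - i) n P w (y ++ z) [::] HP (@rich0 _ S [::]).
rewrite !cats0 => /(_ Hov) Hred; apply: (NRw y c z Ew); apply: Hred.
- by move=> t Ht Htw; have := Hsim t Ht; rewrite /subword Htw.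
- by rewrite Ew; apply: cat_subseq; [apply: subseq_refl | apply: subseq_cons].
- lia.
Qed.

Lemma gen k : forall w P i, size w <= k -> i <= n -> Rich S i P -> over S (P ++ w) ->
  NR P w ->
  exists m, [/\ i <= m, m <= n, Rich S (m - i) w &
             size w <= (m - i) * (h (n.+1 - m)).+1 + h (n - m)].
Proof.
elim: k => [|k IHk] w P i Hk Hi HP Hov NRw.
  apply: (@gen_tail w P i) => //; move=> [Hne _].
  by move: Hne; rewrite -size_eq0 -leqn0 Hk.
case: (classic (w != [::] /\ forall a, a \in S -> a \in w)); last first.
  exact: (@gen_tail w P i).
move=> [Hne Hall].
have HovP : over S P by move: Hov; rewrite /over all_cat => /andP[].
have Hovw : over S w by move: Hov; rewrite /over all_cat => /andP[].
have [w1 [a [w2 [Ew Ha Haw1 Hrich]]]] := rich_decomp Hne Hovw Hall.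
have HovB : over S (P ++ rcons w1 a ++ w2) by rewrite cat_rcons -Ew.
have Hr1 : Rich S 1 (rcons w1 a) by apply: rich1.
have [Hin|Hin] := ltnP i n; last first.
  exfalso.
  have := @red _ S i 0 0 n P (rcons w1 a) w1 w2 HP (@rich0 _ S w2) HovB.
  rewrite cat_rcons -Ew => Hred; apply: (NRw w1 a w2 Ew); apply: Hred.
  - by move=> [|t0 t] //= _ _; apply: sub0seq.
  - exact: subseq_rcons.
  - lia.
have Hsz2 : size w2 <= k by move: Hk; rewrite Ew size_cat /=; lia.
have HP' : Rich S (i + 1) (P ++ rcons w1 a) by apply: rich_cat.
have Hov' : over S ((P ++ rcons w1 a) ++ w2) by rewrite -catA.
have NR' : NR (P ++ rcons w1 a) w2.
  move=> y c z Ey Hs; apply: (NRw (w1 ++ a :: y) c z); first by rewrite Ew Ey -catA.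
  have -> : P ++ (w1 ++ a :: y) ++ z = (P ++ rcons w1 a) ++ y ++ z.
    by rewrite -!catA cat_rcons.
  have -> : P ++ w = (P ++ rcons w1 a) ++ w2 by rewrite Ew -catA cat_rcons.
  exact: Hs.
have Hi1 : i + 1 <= n by lia.
have [m [Hm1 Hm2 Hrm Hszm]] := IHk w2 _ (i + 1) Hsz2 Hi1 HP' Hov' NR'.
set H := h (n.+1 - m) in Hszm *.
have Hw1 : size w1 <= H.
  rewrite leqNgt; apply/negP => Hlt.
  have Hc : #|S :\ a| <= sz by rewrite card_del //; lia.
  have Hovw1 : over S w1 by move: Hovw; rewrite Ew /over all_cat => /andP[].
  have [y [c [z [Ew1 Hsim]]]] := IHh Hc (over_del Hovw1 Haw1) Hlt.
  have := @red _ S i (m - (i + 1)) (n.+1 - m) n P (rcons w1 a) (rcons (y ++ z) a) w2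
    HP Hrm HovB.
  move=> Hred.
  apply: (NRw y c (z ++ a :: w2)); first by rewrite Ew Ew1 -catA.
  have -> : P ++ y ++ z ++ a :: w2 = P ++ rcons (y ++ z) a ++ w2.
    by rewrite cat_rcons -!catA.
  rewrite Ew -cat_rcons; apply: Hred.
  - move=> t Ht /subseq_rconsE [Ht1|[t' [Et Ht']]].
      apply: subseq_trans (subseq_rcons _ a).
      by have := Hsim t Ht; rewrite /subword Ht1.
    subst t; rewrite -!cats1; apply: cat_subseq; last exact: subseq_refl.
    have Ht2 : size t' <= n.+1 - m by move: Ht; rewrite size_rcons => /ltnW.
    by have := Hsim t' Ht2; rewrite /subword Ht'.
  - rewrite -!cats1 Ew1; apply: cat_subseq; last exact: subseq_refl.
    by apply: cat_subseq; [apply: subseq_refl | apply: subseq_cons].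
  - lia.
exists m; split => //; first by lia.
  have -> : m - i = 1 + (m - (i + 1)) by lia.
  by rewrite Ew -cat_rcons; apply: rich_cat.
rewrite Ew size_cat /=.
have -> : m - i = (m - (i + 1)).+1 by lia.
rewrite mulSn; lia.
Qed.

End Gen.
End Bound.

Section Step.
Variable A : finType.

Lemma step (h : nat -> nat) sz
  (IHh : forall (S' : {set A}) r w, #|S'| <= sz -> over S' w -> h r < size w ->
     exists y c z, w = y ++ c :: z /\ simn r (y ++ z) w)
  (S : {set A}) n (w : seq A) :
  #|S| <= sz.+1 -> over S w ->
  \max_(0 <= m < n.+1) (m * h (n.+1 - m) + m + h (n - m)) < size w ->
  exists y c z, w = y ++ c :: z /\ simn n (y ++ z) w.
Proof.
move=> HS Hov Hlt; apply: NNPP => Hno.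
have NRw : NR n [::] w.
  by move=> y c z Ew Hs; apply: Hno; exists y, c, z.
have [m [_ Hm Hr Hsz]] := @gen A h sz IHh S HS n (size w) w [::] 0 (leqnn _)
  (leq0n _) (@rich0 _ S [::]) Hov NRw.
move: Hsz; rewrite subn0 => Hsz.
have : m * h (n.+1 - m) + m + h (n - m) <= \max_(0 <= m < n.+1) (m * h (n.+1 - m) + m + h (n - m)).
  apply: (@leq_bigmax_seq _ _ xpredT (fun m => m * h (n.+1 - m) + m + h (n - m)) m) => //.
  by rewrite mem_index_iota; lia.
move: Hlt Hsz; rewrite mulnS; lia.
Qed.

Lemma boundB j : forall (S : {set A}) r w, #|S| <= j.+1 -> over S w -> fF j r < size w ->
  exists y c z, w = y ++ c :: z /\ simn r (y ++ z) w.
Proof.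
elim: j => [|j IH] S r w HS Hov Hlt.
  apply: (@step (fun _ => 0) 0 _ S) => //.
    move=> S' r' w' HS' Hov' Hlt'; exfalso.
    move: HS'; rewrite leqn0 cards_eq0 => /eqP HS0; subst S'.
    case: w' Hov' Hlt' => [|b w'] //= /andP [].
    by rewrite in_set0.
  apply: leq_ltn_trans Hlt; apply/bigmax_leqP_seq => m; rewrite mem_index_iota.
  by move=> /andP [_ Hm] _ /=; lia.
exact: (@step (fF j) j.+1 IH S).
Qed.

Lemma fF_ge j n : n <= fF j n.
Proof.
elim: j n => [|j IH] n //=.
apply: leq_trans (IH n) _.
have := (@leq_bigmax_seq _ (index_iota 0 n.+1) xpredT (fun m => m * fF j (n.+1 - m) + m + fF j (n - m)) 0).
rewrite mem_index_iota /= => /(_ isT isT).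
by rewrite !subn0 mul0n !add0n.
Qed.

End Step.

Section Cancel.
Variable T : eqType.
Lemma catlI (x a b : seq T) : x ++ a = x ++ b -> a = b.
Proof. by elim: x => //= c x IH [] /IH. Qed.
Lemma catrI (x a b : seq T) : a ++ x = b ++ x -> a = b.
Proof.
move=> E; have Hs : size a = size b by move: (congr1 size E); rewrite !size_cat => /addIn.
by move: (eqxx (a ++ x)); rewrite {2}E eqseq_cat // => /andP [/eqP].
Qed.
Lemma sub_del (x y : seq T) c : subseq (x ++ y) (x ++ c :: y).
Proof. by rewrite subseq_cat2l; apply: subseq_cons. Qed.
End Cancel.

Section Class.
Variable A : eqType.
Variables n F : nat.
Hypothesis HB : forall w : seq A, F < size w ->
  exists y c z, w = y ++ c :: z /\ simn n (y ++ z) w.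
Variable v : seq A.
Let C (t : seq A) := simn n t v.
Implicit Types s t w x y z : seq A.

Lemma longC w : C w -> F < size w -> exists x c y, w = x ++ c :: y /\ C (x ++ y).
Proof.
move=> Cw Hw; have [x [c [y [E H]]]] := HB Hw.
by exists x, c, y; split => //; apply: simn_trans H Cw.
Qed.

Lemma pumpC x c y : C (x ++ y) -> C (x ++ c :: y) -> C (x ++ c :: c :: y).
Proof.
move=> H1 H2; have H := pump (simn_trans H1 (simn_sym H2)).
exact: simn_trans (simn_sym H) H2.
Qed.

Lemma convC a b c : subseq a b -> subseq b c -> C a -> C c -> C b.
Proof.
move=> Hab Hbc Ca Cc.
have H := simn_conv Hab Hbc (simn_trans Ca (simn_sym Cc)).
exact: simn_trans H Cc.
Qed.

Lemma reduce k : forall w, size w <= k -> exists m, [/\ subseq m w, simn n m w & size m <= F].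
Proof.
elim: k => [|k IH] w Hw.
  by exists w; split; [apply: subseq_refl | apply: simn_refl | lia].
have [le|lt] := leqP (size w) F.
  by exists w; split; [apply: subseq_refl | apply: simn_refl | ].
have [y [c [z [E H]]]] := HB lt.
have Hsz : size (y ++ z) <= k by move: Hw; rewrite E !size_cat /=; lia.
have [m [H1 H2 H3]] := IH _ Hsz.
exists m; split => //.
  by apply: subseq_trans H1 _; rewrite E; apply: sub_del.
exact: simn_trans H2 H.
Qed.

Lemma grow w0 : C w0 -> F < size w0 -> forall p, exists z, [/\ C z, F < size z & p <= size z].
Proof.
move=> C0 H0; elim=> [|p [z [Cz Fz Pz]]]; first by exists w0.
have [x [c [y [E Cxy]]]] := longC Cz Fz.
have Cz2 : C (x ++ c :: c :: y) by apply: pumpC => //; rewrite -E.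
by exists (x ++ c :: c :: y); split => //; move: Fz Pz; rewrite E !size_cat /=; lia.
Qed.

Definition Uq l := forall w1 w2, C w1 -> C w2 -> size w1 = l -> size w2 = l -> w1 = w2.

Lemma upcore E x c y : C E -> E = x ++ c :: y -> C (x ++ y) -> Uq (size E) ->
  forall w, C w -> size w = (size E).+1 -> F < size w -> w = x ++ c :: c :: y.
Proof.
move=> CE Ex Cxy HU w Cw Hw Fw.
have [x' [d [y' [Ew Cxy']]]] := longC Cw Fw.
have Exy' : x' ++ y' = E.
  apply: HU => //; move: Hw; rewrite Ew !size_cat /=; lia.
rewrite Ex in Exy'.
have left_case : forall s, x = x' ++ s -> y' = s ++ c :: y -> w = x ++ c :: c :: y.
  move=> s Ex' Ey'.
  have Cw' : C (x' ++ d :: s ++ y).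
    apply: (convC (a := x ++ y) (c := w)) => //.
    - by rewrite Ex' -catA; apply: sub_del.
    - by rewrite Ew Ey' -(cat_cons d s) -(cat_cons d s) !catA; apply: sub_del.
  have E' : x' ++ d :: s ++ y = E.
    apply: HU => //; move: Hw; rewrite Ew Ey' Ex !size_cat /= !size_cat /=; lia.
  rewrite Ex Ex' -catA in E'; have := catlI E'.
  rewrite -(cat_cons d s) -cat_rcons => /catrI E2.
  by rewrite Ew Ey' Ex' -catA -(cat_cons d) E2 cat_rcons.
have [s [[E1 E2]|[E1 E2]]] := cat_eqE Exy'.
  exact: (left_case s).
case: s E1 E2 => [|c0 s] E1 E2.
  by apply: (left_case [::]); rewrite ?cats0 // ?E1 ?cats0 // E2.
case: E2 => Ec0 Ey; subst c0.
have Cw' : C (x ++ s ++ d :: y').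
  apply: (convC (a := x ++ y) (c := w)) => //.
  - by rewrite Ey !catA; apply: sub_del.
  - by rewrite Ew E1 -catA; apply: sub_del.
have E' : x ++ s ++ d :: y' = E.
  apply: HU => //; move: Hw; rewrite Ew E1 Ex Ey !size_cat /= !size_cat /=; lia.
rewrite Ex Ey in E'; have /= E3 := catlI E'.
by rewrite Ew E1 -catA /= E3 Ey.
Qed.

Lemma up l : F < l -> Uq l -> Uq l.+1.
Proof.
move=> Fl HU w1 w2 C1 C2 S1 S2.
have F1 : F < size w1 by rewrite S1; lia.
have [x1 [d1 [y1 [E1 Cxy1]]]] := longC C1 F1.
have Hl : size (x1 ++ y1) = l by move: S1; rewrite E1 !size_cat /=; lia.
have F2 : F < size (x1 ++ y1) by rewrite Hl.
have [x [c [y [E Cxy]]]] := longC Cxy1 F2.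
have HU' : Uq (size (x1 ++ y1)) by rewrite Hl.
rewrite (upcore Cxy1 E Cxy HU' C1) ?Hl ?S1 //; last by lia.
by rewrite (upcore Cxy1 E Cxy HU' C2) ?Hl ?S2 //; lia.
Qed.

Lemma down l : F < l -> Uq l.+1 -> Uq l.
Proof.
move=> Fl HU w1 w2 C1 C2 S1 S2.
have F1 : F < size w1 by rewrite S1.
have F2 : F < size w2 by rewrite S2.
have [x1 [d1 [y1 [E1 Cxy1]]]] := longC C1 F1.
have [x2 [d2 [y2 [E2 Cxy2]]]] := longC C2 F2.
have CE1 : C (x1 ++ d1 :: d1 :: y1) by apply: pumpC => //; rewrite -E1.
have CE2 : C (x2 ++ d2 :: d2 :: y2) by apply: pumpC => //; rewrite -E2.
have EE : x1 ++ d1 :: d1 :: y1 = x2 ++ d2 :: d2 :: y2.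
  apply: HU => //.
    by move: S1; rewrite E1 !size_cat /=; lia.
  by move: S2; rewrite E2 !size_cat /=; lia.
have Ed1 : x1 ++ d1 :: d1 :: y1 = rcons x1 d1 ++ d1 :: y1 by rewrite cat_rcons.
have Ed2 : x2 ++ d2 :: d2 :: y2 = rcons x2 d2 ++ d2 :: y2 by rewrite cat_rcons.
have Cw1 : C (rcons x1 d1 ++ y1) by rewrite cat_rcons -E1.
have Cw2 : C (rcons x2 d2 ++ y2) by rewrite cat_rcons -E2.
have HU' : Uq (size (x1 ++ d1 :: d1 :: y1)).
  have -> : size (x1 ++ d1 :: d1 :: y1) = l.+1.
    by move: S1; rewrite E1 !size_cat /=; lia.
  exact: HU.
have CF1 : C (rcons x2 d2 ++ d2 :: d2 :: y2).
  by apply: pumpC => //; rewrite -Ed2.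
have Hsz : size (rcons x2 d2 ++ d2 :: d2 :: y2) = (size (x1 ++ d1 :: d1 :: y1)).+1.
  by rewrite EE size_cat size_rcons !size_cat /=; lia.
have Fs : F < size (rcons x2 d2 ++ d2 :: d2 :: y2).
  by rewrite Hsz; move: S1; rewrite E1 !size_cat /=; lia.
have Efin := upcore CE1 Ed1 Cw1 HU' CF1 Hsz Fs.
have EE' : rcons x2 d2 ++ d2 :: y2 = rcons x1 d1 ++ d1 :: y1 by rewrite -Ed1 -Ed2 EE.
have := delD EE' Efin; rewrite !cat_rcons -E1 -E2 => ->.
by [].
Qed.

Lemma uq_all L0 : F < L0 -> Uq L0 -> forall l, F < l -> Uq l.
Proof.
move=> F0 U0.
have upd : forall d, Uq (L0 + d).
  elim=> [|d IH]; first by rewrite addn0.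
  by rewrite addnS; apply: up => //; lia.
have downd : forall d, d <= L0 -> F < L0 - d -> Uq (L0 - d).
  elim=> [|d IH] Hd Fd; first by rewrite subn0.
  apply: down => //.
  have -> : (L0 - d.+1).+1 = L0 - d by lia.
  by apply: IH; lia.
move=> l Fl; have [le|lt] := leqP L0 l.
  by rewrite -(subnKC le); apply: upd.
have -> : l = L0 - (L0 - l) by lia.
by apply: downd; lia.
Qed.

Lemma comp (HU : forall l, F < l -> Uq l) d : forall w1 w2, C w1 -> C w2 ->
  F < size w1 -> size w2 = size w1 + d -> subseq w1 w2.
Proof.
elim: d => [|d IH] w1 w2 C1 C2 F1 S2.
  rewrite addn0 in S2; rewrite (HU _ F1 w1 w2) //; exact: subseq_refl.
have F2 : F < size w2 by rewrite S2; lia.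
have [x [c [y [E Cxy]]]] := longC C2 F2.
have Sxy : size (x ++ y) = size w1 + d by move: S2; rewrite E !size_cat /=; lia.
apply: subseq_trans (IH _ _ C1 Cxy F1 Sxy) _.
by rewrite E; apply: sub_del.
Qed.

Lemma chain (u' : seq A) (J : forall t, C t -> subseq t u' \/ subseq u' t) d :
  forall a b, C a -> C b -> subseq a b -> size b = size a + d ->
  subseq a u' -> ~~ subseq b u' -> C u'.
Proof.
elim: d => [|d IH] a b Ca Cb Hab Sb Hau Hbu.
  rewrite addn0 in Sb; have E := subseq_eq_size Hab (esym Sb).
  by subst b; rewrite Hau in Hbu.
have Hlt : size a < size b by rewrite Sb; lia.
have [a' [H1 H2 H3]] := insert_step Hab Hlt.
have Ca' : C a' := convC H1 H2 Ca Cb.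
case: (J a' Ca') => [Ha'u|Hua'].
  by apply: (IH a' b) => //; rewrite Sb H3; lia.
exact: convC Hau Hua' Ca Ca'.
Qed.

Lemma main_dir (HnF : n <= F.+1) u u' : simn F.+1 u u' -> incomparable u v ->
  exists v', C v' /\ incomparable u' v'.
Proof.
move=> Hsim [Huv Hvu].
have [le|Fu] := leqP (size u) F.
  have Hl : size u < F.+1 by lia.
  have E := simn_small Hsim Hl.
  by subst u'; exists v; split => //; apply: simn_refl.
have Fu' : F < size u'.
  rewrite ltnNge; apply/negP => le.
  have Hl : size u' < F.+1 by lia.
  have E := simn_small (simn_sym Hsim) Hl.
  by subst u'; lia.
case: (classic (exists t, [/\ C t, size t <= F & ~~ subword t u])) => [[t [Ct St Ntu]]|Hno].
  exists t; split => //; split.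
    by apply: subseq_size_gt; lia.
  by rewrite -(Hsim t) //; lia.
have Hshort : forall t, C t -> size t <= F -> subword t u.
  move=> t Ct St; apply: NNPP => Hn; apply: Hno; exists t; split => //.
  by apply/negP.
apply: NNPP => Hno2.
have J : forall t, C t -> subseq t u' \/ subseq u' t.
  move=> t Ct; case Htu: (subseq t u'); first by left.
  case Hut: (subseq u' t); first by right.
  by exfalso; apply: Hno2; exists t; split => //; split; rewrite /subword ?Htu ?Hut.
have Cv : C v by apply: simn_refl.
have Fv : F < size v.
  rewrite ltnNge; apply/negP => le.
  by move: Hvu; rewrite (Hshort v Cv le).
have [z [Cz Fz Pz]] := grow Cv Fv (size u').+1.
have [m [Hmz Hmsim Hm]] := reduce (leqnn (size z)).
have Cm : C m by apply: simn_trans Hmsim Cz.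
have Hmu' : subseq m u'.
  have Hm1 : size m <= F.+1 by lia.
  by have := Hshort m Cm Hm; rewrite (Hsim m Hm1).
have Hzu' : ~~ subseq z u' by apply: subseq_size_gt; lia.
have Cu' : C u'.
  apply: (chain J (d := size z - size m) Cm Cz Hmz) => //.
  by have := size_subseq Hmz; lia.
have U0 : Uq (size u').
  move=> w1 w2 C1 C2 S1 S2.
  have eq_u : forall w, C w -> size w = size u' -> w = u'.
    move=> w Cw Sw; case: (J w Cw) => H; first exact: subseq_eq_size H Sw.
    by apply/esym; apply: subseq_eq_size H (esym Sw).
  by rewrite (eq_u w1) // (eq_u w2).
have HU := uq_all Fu' U0.
have Cu : C u by apply: simn_trans Cu'; apply: simn_mono HnF Hsim.
have [le|lt] := leqP (size u) (size v).
  move: Huv; rewrite /subword (comp HU (d := size v - size u) Cu Cv) //; lia.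
move: Hvu; rewrite /subword (comp HU (d := size u - size v) Cv Cu) //; lia.
Qed.

End Class.

Theorem theorem20 (A : finType) (k n : nat) (L : seq A -> Prop) :
  #|A| = k -> 0 < k -> nPT n L -> nPT (f k n).+1 (Iset L).
Proof.
move=> HA Hk HL.
have HB : forall w : seq A, f k n < size w ->
    exists y c z, w = y ++ c :: z /\ simn n (y ++ z) w.
  move=> w Hw; apply: (@boundB A k.-1 [set: A]) => //.
    by rewrite cardsT HA; lia.
  by apply/allP => a _; rewrite in_setT.
have HnF : n <= (f k n).+1 by apply: leq_trans (fF_ge k.-1 n) (leqnSn _).
have dir : forall u u', simn (f k n).+1 u u' -> Iset L u -> Iset L u'.
  move=> u u' Hs [v [Lv Huv]].
  have [v' [Cv' Hinc]] := main_dir HB HnF Hs Huv.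
  exists v'; split => //; exact: (proj2 (HL _ _ Cv')).
move=> u u' Hs; split; first exact: dir.
by apply: dir; apply: simn_sym.
Qed.
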